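(* Let $E$ be a finite set. The U-matroid rank functions on $E$ are precisely the restrictions $\rho|_\mathcal{D}$ of matroid rank functions $\rho:2^E\to\mathbb{N}$ to accessible distributive sublattices $\mathcal{D}\subseteq 2^E$.
   Context: An accessible distributive lattice on a finite set $E$ is a family $\mathcal{D}\subseteq 2^E$ containing $\emptyset$ and $E$, closed under union and intersection, such that every nonempty $A\in\mathcal{D}$ contains some $x$ with $A\setminus\{x\}\in\mathcal{D}$. A U-matroid rank function on $E$ is a function $\rho:\mathcal{D}\to\mathbb{N}$ on an accessible distributive lattice $\mathcal{D}\subseteq2^E$ satisfying $\rho(\emptyset)=0$; $\rho(A)\le\rho(B)$ whenever $A\subseteq B$; $\rho(A)+\rho(B)\ge\rho(A\cup B)+\rho(A\cap B)$; and $\rho(A\cup\{e\})-\rho(A)\le1$ whenever $A,A\cup\{e\}\in\mathcal{D}$. A matroid rank function is such a function with $\mathcal{D}=2^E$. *)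

(* Defs.v *)
(* E is modelled by a finite type T; 2^E is {set T}. *)
From mathcomp Require Import all_boot.
Set Implicit Arguments. Unset Strict Implicit. Unset Printing Implicit Defensive.

Definition accessible_distr_lattice (T : finType) (D : {set {set T}}) : Prop :=
  [/\ set0 \in D, [set: T] \in D,
      (forall A B, A \in D -> B \in D -> A :|: B \in D),
      (forall A B, A \in D -> B \in D -> A :&: B \in D)
    & (forall A, A \in D -> A != set0 -> exists2 x, x \in A & A :\ x \in D)].

(* rho : D -> N is represented by a total function {set T} -> nat of which
   only the values on D matter. *)
Definition U_matroid_rank (T : finType) (D : {set {set T}}) (rho : {set T} -> nat) : Prop :=
  accessible_distr_lattice D /\
  [/\ rho set0 = 0,
      (forall A B, A \in D -> B \in D -> A \subset B -> rho A <= rho B),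
      (forall A B, A \in D -> B \in D ->
          rho (A :|: B) + rho (A :&: B) <= rho A + rho B)
    & (forall A e, A \in D -> e |: A \in D -> rho (e |: A) - rho A <= 1)].

Definition matroid_rank (T : finType) (r : {set T} -> nat) : Prop :=
  U_matroid_rank [set: {set T}] r.

(* Main.v *)
Require Import Defs.
From mathcomp Require Import all_boot.

Lemma card_sumb (T : finType) (S : {set T}) : #|S| = \sum_(x : T) (x \in S : nat).
Proof. by rewrite -sum1_card big_mkcond. Qed.

Lemma card_ineq (T : finType) (X Z A1 A2 : {set T}) :
  #|(X :|: Z) :\: (A1 :|: A2)| + #|(X :&: Z) :\: (A1 :&: A2)|
  <= #|X :\: A1| + #|Z :\: A2|.
Proof.
rewrite !card_sumb -!big_split /=; apply: leq_sum => x _.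
rewrite !inE; by case: (x \in X); case: (x \in Z); case: (x \in A1); case: (x \in A2).
Qed.


Lemma chain_lemma (T : finType) (D : {set {set T}}) (rho : {set T} -> nat) :
  U_matroid_rank D rho ->
  forall A B, A \in D -> B \in D -> B \subset A -> rho A <= rho B + #|A :\: B|.
Proof.
move=> [[D0 DT DU DI Dacc] [r0 rmono rsub runit]].
move=> A; elim: {A}#|A| {-2}A (eqxx #|A|) => [|n IH] A /eqP hA B AD BD BA.
  move/eqP: hA; rewrite cards_eq0 => /eqP hA; subst A.
  by move: BA; rewrite subset0 => /eqP ->; rewrite leq_addr.
have An0 : A != set0 by apply/eqP => h; move: hA; rewrite h cards0.
have [x xA A'D] := Dacc A AD An0.
have cA' : #|A :\ x| = n by move: hA; rewrite (cardsD1 x A) xA add1n => -[].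
have eA : A = x |: (A :\ x) by rewrite setD1K.
case xB: (x \in B).
- have B'D : B :\ x \in D.
    have -> : B :\ x = B :&: (A :\ x).
      apply/setP => y; rewrite !inE; move: (subsetP BA y); case: (y =P x) => [->|_]; rewrite ?xA ?xB //=; by case: (y \in A); case: (y \in B) => //= /(_ isT).
    exact: (DI _ _ BD A'D).
  have sub' : B :\ x \subset A :\ x by apply: setSD.
  have := IH (A :\ x) (introT eqP cA') (B :\ x) A'D B'D sub'.
  have := rsub (A :\ x) B A'D BD.
  have -> : (A :\ x) :|: B = A.
    apply/setP => y; rewrite !inE; move: (subsetP BA y); case: (y =P x) => [->|_]; rewrite ?xA ?xB //=; by case: (y \in A); case: (y \in B) => //= /(_ isT).
  have -> : (A :\ x) :&: B = B :\ x.
    apply/setP => y; rewrite !inE; move: (subsetP BA y); case: (y =P x) => [->|_]; rewrite ?xA ?xB //=; by case: (y \in A); case: (y \in B) => //= /(_ isT).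
  have -> : (A :\ x) :\: (B :\ x) = A :\: B.
    apply/setP => y; rewrite !inE; move: (subsetP BA y); case: (y =P x) => [->|_]; rewrite ?xA ?xB //=; by case: (y \in A); case: (y \in B) => //= /(_ isT).
  move=> h1 h2.
  have := leq_trans h1 (leq_add h2 (leqnn (rho B))).
  by rewrite -addnA [rho A + _]addnC leq_add2l addnC.
- have sub' : B \subset A :\ x.
    apply/subsetP => y yB; rewrite !inE; move/subsetP: BA => /(_ y yB) ->.
    by rewrite andbT; apply/eqP => yx; rewrite -yx yB in xB.
  have h := IH (A :\ x) (introT eqP cA') B A'D BD sub'.
  have u := runit (A :\ x) x A'D; rewrite -eA in u; have {}u := u AD.
  have cD : #|A :\: B| = (#|(A :\ x) :\: B|).+1.
    rewrite (cardsD1 x (A :\: B)) !inE xB xA /= add1n; congr (_.+1); apply: eq_card => y.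
    by rewrite !inE; case: (y != x); case: (y \in B).
  rewrite cD addnS.
  have : rho A <= (rho (A :\ x)).+1 by rewrite -addn1 -leq_subLR.
  move=> h3; apply: (leq_trans h3); by rewrite ltnS.
Qed.

Lemma card_unit (T : finType) (Y X A : {set T}) :
  #|(Y :|: X) :\: A| <= #|Y| + #|X :\: A|.
Proof.
rewrite !card_sumb -!big_split /=; apply: leq_sum => x _.
rewrite !inE; by case: (x \in X); case: (x \in Y); case: (x \in A).
Qed.

Lemma card_mono (T : finType) (X Y A : {set T}) :
  X \subset Y -> #|X :\: A| <= #|Y :\: A|.
Proof. by move=> h; apply: subset_leq_card; apply: setSD. Qed.

Definition ext (T : finType) (D : {set {set T}}) (rho : {set T} -> nat) (X : {set T}) :=
  let A := [arg min_(A < set0 in D) (rho A + #|X :\: A|)] in rho A + #|X :\: A|.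

Arguments ext {T}.

Lemma ext_le (T : finType) (D : {set {set T}}) rho X B :
  set0 \in D -> B \in D -> ext D rho X <= rho B + #|X :\: B|.
Proof. by move=> D0 BD; rewrite /ext; case: arg_minnP => // A AD; apply. Qed.

Arguments ext_le {T D} rho X {B}.

Lemma ext_ex (T : finType) (D : {set {set T}}) rho X :
  set0 \in D -> exists2 A, A \in D & ext D rho X = rho A + #|X :\: A|.
Proof. by move=> D0; rewrite /ext; case: arg_minnP => // A AD _; exists A. Qed.

Arguments ext_ex {T D} rho X.

Theorem corollary4p13 (T : finType) (D : {set {set T}}) (rho : {set T} -> nat) :
  U_matroid_rank D rho <->
  accessible_distr_lattice D /\
  exists r : {set T} -> nat, matroid_rank r /\ {in D, forall A, r A = rho A}.
Proof.
split.
- move=> H; have chain := @chain_lemma T D rho H.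
  move: H => [[D0 DT DU DI Dacc] [r0 rmono rsub runit]].
  split; first by split.
  exists (ext D rho); split; last first.
    move=> B BD; apply/eqP; rewrite eqn_leq; apply/andP; split.
      by apply: leq_trans (ext_le _ _ D0 BD) _; rewrite setDv cards0 addn0.
    have [A AD ->] := ext_ex rho B D0.
    have BAD : B :&: A \in D by apply: DI.
    apply: leq_trans (chain B (B :&: A) BD BAD (subsetIl B A)) _.
    have -> : B :\: (B :&: A) = B :\: A.
      by apply/setP => y; rewrite !inE; case: (y \in A); case: (y \in B).
    by rewrite leq_add2r; apply: rmono => //; apply: subsetIr.
  split.
    split; rewrite ?inE //.
    1,2: by move=> *; rewrite inE.
    move=> A _ /set0Pn [x xA]; exists x => //; by rewrite inE.
  split.
  + by apply/eqP; rewrite -leqn0; apply: leq_trans (ext_le _ _ D0 D0) _; rewrite r0 set0D cards0.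
  + move=> X Y _ _ XY; have [A AD ->] := ext_ex rho Y D0.
    by apply: leq_trans (ext_le _ _ D0 AD) _; rewrite leq_add2l card_mono.
  + move=> X Z _ _.
    have [A1 A1D ->] := ext_ex rho X D0.
    have [A2 A2D ->] := ext_ex rho Z D0.
    have h1 := ext_le rho (X :|: Z) D0 (DU _ _ A1D A2D).
    have h2 := ext_le rho (X :&: Z) D0 (DI _ _ A1D A2D).
    apply: leq_trans (leq_add h1 h2) _.
    rewrite addnACA [rho A1 + _ + _]addnACA.
    apply: leq_add; [exact: rsub | exact: card_ineq].
  + move=> X e _ _; have [A AD ->] := ext_ex rho X D0.
    rewrite leq_subLR; apply: leq_trans (ext_le _ _ D0 AD) _.
    rewrite -addnA leq_add2l addnC.
    by apply: (leq_trans (card_unit _ [set e] X A)); rewrite cards1.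
- move=> [acc [r [[_ [r0 rmono rsub runit]] agree]]].
  move: (acc) => [D0 DT DU DI Dacc].
  split => //; split.
  + by rewrite -agree.
  + by move=> A B AD BD AB; rewrite -!agree // rmono ?inE.
  + by move=> A B AD BD; rewrite -!agree ?DU ?DI // rsub ?inE.
  + by move=> A e AD eAD; rewrite -!agree // runit ?inE.
Qed.
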